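(* Let $M,N\ge1$ be integers, let $L$ be a common divisor of $M$ and $N$, and let $T=\mathrm{lcm}(M,N)$. The group $H_{M,N,L}$ has exponent $T$ if $T$ is odd or $T/L$ is even, and exponent $2T$ otherwise. In particular $H_{N,N,N}$, for $N$ odd, and $H_{N,N,N/2}$, for $N$ even, have exponent $N$.
   Context: The Heisenberg group over $\mathbb{Z}$ is the group of $3\times3$ unipotent upper triangular integer matrices; it is generated by $x=\begin{pmatrix}1&1&0\\0&1&0\\0&0&1\end{pmatrix}$, $y=\begin{pmatrix}1&0&0\\0&1&1\\0&0&1\end{pmatrix}$, with $z=xyx^{-1}y^{-1}=\begin{pmatrix}1&0&1\\0&1&0\\0&0&1\end{pmatrix}$ central. For $M,N\ge1$ and $L$ a common divisor of $M$ and $N$, $H_{M,N,L}$ is the group generated by $x,y$ subject to the relations $xz=zx$, $yz=zy$, $z=xyx^{-1}y^{-1}$, $x^N=y^M=z^L=1$; it has order $MNL$. *)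

(* Defs.v *)
From mathcomp Require Import all_boot all_fingroup all_solvable.
Set Implicit Arguments. Unset Strict Implicit. Unset Printing Implicit Defensive.
Local Open Scope group_scope.

(* G is (isomorphic to) H_{M,N,L} = < x, y | xz = zx, yz = zy, x^N = y^M = z^L = 1 >
   with z = x y x^-1 y^-1 = [~ x^-1, y^-1] (MathComp: [~ a, b] = a^-1 b^-1 a b). *)
Definition is_HMNL (gT : finGroupType) (G : {group gT}) (M N L : nat) : Prop :=
  G \isog Grp (x : y : (x * [~ x^-1, y^-1] = [~ x^-1, y^-1] * x,
                        y * [~ x^-1, y^-1] = [~ x^-1, y^-1] * y,
                        x ^+ N = 1, y ^+ M = 1, [~ x^-1, y^-1] ^+ L = 1)).

(* Main.v *)
From HB Require Import structures.
Require Import Defs.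
From mathcomp Require Import all_boot all_fingroup all_solvable.
From mathcomp Require Import zify.
Set Implicit Arguments. Unset Strict Implicit. Unset Printing Implicit Defensive.


Section Heis.
Variables n m l : nat.
Definition KK := gcdn (gcdn n.+1 m.+1) l.+1.
Lemma KK_gt0 : 0 < KK. Proof. by rewrite gcdn_gt0 orbT. Qed.
Lemma KK_N : KK %| n.+1. Proof. exact: dvdn_trans (dvdn_gcdl _ _) (dvdn_gcdl _ _). Qed.
Lemma KK_M : KK %| m.+1. Proof. exact: dvdn_trans (dvdn_gcdl _ _) (dvdn_gcdr _ _). Qed.
Lemma KK_L : KK %| l.+1. Proof. exact: dvdn_gcdr. Qed.

Definition heis := ('I_n.+1 * 'I_m.+1 * 'I_KK)%type.
HB.instance Definition _ := Finite.on heis.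

Definition raw := (nat * nat * nat)%type.
Definition rawmul (u v : raw) : raw :=
  (u.1.1 + v.1.1, u.1.2 + v.1.2, u.2 + v.2 + u.1.1 * v.1.2).
Definition rep (u : raw) : heis :=
  (Ordinal (ltn_pmod u.1.1 (ltn0Sn n)), Ordinal (ltn_pmod u.1.2 (ltn0Sn m)),
   Ordinal (ltn_pmod u.2 KK_gt0)).
Definition tr (p : heis) : raw := (val p.1.1, val p.1.2, val p.2).

Definition eqm (u v : raw) :=
  [/\ u.1.1 = v.1.1 %[mod n.+1], u.1.2 = v.1.2 %[mod m.+1] & u.2 = v.2 %[mod KK]].

Lemma repP u v : rep u = rep v <-> eqm u v.
Proof.
split.
  by case=> /= e1 e2 e3; split.
case=> e1 e2 e3; rewrite /rep; congr (_, _, _); apply: val_inj => //=.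
Qed.

Lemma trK p : rep (tr p) = p.
Proof.
case: p => [[a b] c]; rewrite /rep /tr /=; congr (_, _, _); apply: val_inj => /=;
  by rewrite modn_small.
Qed.

Lemma tr_rep u : eqm (tr (rep u)) u.
Proof. by split; rewrite /= modn_mod. Qed.

Lemma addm d a a' b b' : a = a' %[mod d] -> b = b' %[mod d] -> a + b = a' + b' %[mod d].
Proof. by move=> e1 e2; rewrite -modnDm e1 e2 modnDm. Qed.
Lemma mulm d a a' b b' : a = a' %[mod d] -> b = b' %[mod d] -> a * b = a' * b' %[mod d].
Proof. by move=> e1 e2; rewrite -modnMm e1 e2 modnMm. Qed.

Lemma rawmul_eqm u u' v v' : eqm u u' -> eqm v v' -> eqm (rawmul u v) (rawmul u' v').
Proof.
case: u u' v v' => [[a b] c] [[a' b'] c'] [[d e] f] [[d' e'] f'].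
case=> /= e1 e2 e3 [/= e4 e5 e6]; split => /=.
- exact: addm.
- exact: addm.
have ea : a = a' %[mod KK] by rewrite -(modn_dvdm _ KK_N) e1 (modn_dvdm _ KK_N).
have eb : e = e' %[mod KK] by rewrite -(modn_dvdm _ KK_M) e5 (modn_dvdm _ KK_M).
by apply: addm; [apply: addm | apply: mulm].
Qed.

Definition hmul (p q : heis) : heis := rep (rawmul (tr p) (tr q)).
Definition hone : heis := rep (0, 0, 0).
Definition hinv (p : heis) : heis :=
  rep (n.+1 - (tr p).1.1, m.+1 - (tr p).1.2, KK - (tr p).2 + (tr p).1.1 * (tr p).1.2).

Lemma hmul_rep u v : hmul (rep u) (rep v) = rep (rawmul u v).
Proof. by apply/repP; apply: rawmul_eqm; apply: tr_rep. Qed.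

Lemma hmulA : associative hmul.
Proof.
move=> p q r; rewrite -(trK p) -(trK q) -(trK r) !hmul_rep; congr rep.
case: (tr p) (tr q) (tr r) => [[a b] c] [[d e] f] [[g h] i]; rewrite /rawmul /=.
congr (_, _, _); [exact: addnA | exact: addnA |].
by rewrite mulnDl mulnDr; lia.
Qed.

Lemma hmul1 : left_id hone hmul.
Proof.
move=> p; rewrite -{2}(trK p) /hone -{1}(trK p) hmul_rep; congr rep.
by case: (tr p) => [[a b] c]; rewrite /rawmul /= !add0n addn0.
Qed.

Lemma hmulV : left_inverse hone hinv hmul.
Proof.
move=> p; rewrite /hinv; set q := rep _; rewrite -[X in hmul q X]trK /q hmul_rep /hone; apply/repP.
clear q; case: p => [[a b] c]; rewrite /tr /rawmul /=; split => /=.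
- by rewrite subnK ?modnn ?mod0n // ltnW.
- by rewrite subnK ?modnn ?mod0n // ltnW.
have -> : KK - c + a * b + c + (n.+1 - a) * b = KK + n.+1 * b.
  rewrite mulnBl; have := leq_mul (ltnW (ltn_ord a)) (leqnn b).
  have := ltn_ord c; lia.
by rewrite mod0n; apply/eqP; rewrite -/(dvdn _ _) dvdn_add // dvdn_mulr // KK_N.
Qed.

HB.instance Definition _ := Finite_isGroup.Build heis hmulA hmul1 hmulV.

End Heis.

Close Scope group_scope.
Open Scope group_scope.
Lemma upper (gT : finGroupType) (G : {group gT}) M N L E :
  is_HMNL G M N L -> N %| E -> M %| E -> L %| 'C(E, 2) -> exponent G %| E.
Proof.
move=> /isoGrp_hom /existsP[[x y]] /=.
rewrite !xpair_eqE /=.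
set z := [~ x^-1, y^-1].
case/andP=> /eqP defG /and5P[/eqP cxz /eqP cyz /eqP xN /eqP yM /eqP zL] NE ME LC.
have zC : z \in 'C(G).
  rewrite -sub_cent1 -defG join_subG !cycle_subG.
  by apply/andP; split; apply/cent1P.
have der : G^`(1) = <[z]>.
  have := @der1_joing_cycles _ x^-1 y^-1.
  by rewrite !cycleV defG; apply.
have zcent : <[z]> \subset 'C(G) by rewrite cycle_subG.
have oz : #[z] %| L by rewrite order_dvdn zL.
pose S := [set g in G | g ^+ E == 1].
have gS : group_set S.
  apply/group_setP; split; first by rewrite inE group1 expg1n eqxx.
  move=> g h; rewrite !inE => /andP[Gg /eqP gE] /andP[Gh /eqP hE].
  rewrite groupM //=.
  have Rhg : [~ h, g] \in <[z]> by rewrite -der mem_commg.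
  have cR : [~ h, g] \in 'C(G) by apply: (subsetP zcent).
  rewrite expMg_Rmul; first last.
  - by apply: commute_sym; apply: (centP cR).
  - by apply: commute_sym; apply: (centP cR).
  rewrite gE hE !mul1g -order_dvdn.
  apply: dvdn_trans LC; apply: dvdn_trans oz.
  exact: order_dvdG Rhg.
have sGS : G \subset Group gS.
  rewrite -defG join_subG !cycle_subG !inE -!defG !mem_gen ?inE ?cycle_id ?orbT //=.
  by apply/andP; split; [rewrite -(divnK NE) mulnC expgM xN | rewrite -(divnK ME) mulnC expgM yM]; rewrite expg1n.
apply/exponentP => g Gg.
by have := subsetP sGS g Gg; rewrite inE => /andP[_ /eqP].
Qed.

Open Scope group_scope.
Section Props.
Variables n m l : nat.
Local Notation H := (heis n m l).
Local Notation rep := (@rep n m l).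
Lemma mul_rep u v : rep u * rep v = rep (rawmul u v).
Proof. exact: hmul_rep. Qed.
Lemma oneE : (1 : H) = rep (0%N, 0%N, 0%N). Proof. by []. Qed.
Lemma rep1 u : (rep u == 1) = [&& n.+1 %| u.1.1, m.+1 %| u.1.2 & KK n m l %| u.2].
Proof.
rewrite oneE; apply/eqP/and3P => [/repP[/= e1 e2 e3] | [/eqP e1 /eqP e2 /eqP e3]].
  by rewrite /dvdn e1 e2 e3 !mod0n.
by apply/repP; split; rewrite ?mod0n.
Qed.
Definition X := rep (1%N, 0%N, 0%N).
Definition Y := rep (0%N, 1%N, 0%N).
Definition Z := rep (0%N, 0%N, 1%N).
Lemma expX k : X ^+ k = rep (k, 0%N, 0%N).
Proof.
elim: k => [|k IH]; first by [].
by rewrite expgS IH mul_rep; apply: (congr1 rep); rewrite /rawmul /=; congr (_, _, _); lia.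
Qed.
Lemma expY k : Y ^+ k = rep (0%N, k, 0%N).
Proof.
elim: k => [|k IH]; first by [].
by rewrite expgS IH mul_rep; apply: (congr1 rep); rewrite /rawmul /=; congr (_, _, _); lia.
Qed.
Lemma expZ k : Z ^+ k = rep (0%N, 0%N, k).
Proof.
elim: k => [|k IH]; first by [].
by rewrite expgS IH mul_rep; apply: (congr1 rep); rewrite /rawmul /=; congr (_, _, _); lia.
Qed.
Lemma expYX k : (Y * X) ^+ k = rep (k, k, 'C(k, 2)).
Proof.
rewrite /X /Y mul_rep.
elim: k => [|k IH]; first by [].
rewrite expgS IH mul_rep; apply: (congr1 rep); rewrite /rawmul /= binS bin1.
congr (_, _, _); lia.
Qed.
Lemma Zcent p : p * Z = Z * p.
Proof.
rewrite -(trK p) /Z !mul_rep; apply: (congr1 rep).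
by case: (tr p) => [[a b] c]; rewrite /rawmul /=; congr (_, _, _); lia.
Qed.
Lemma commXY : [~ X^-1, Y^-1] = Z.
Proof.
have e : X * Y = Z * (Y * X) by rewrite /X /Y /Z !mul_rep.
by rewrite /commg /conjg !invgK !mulgA e mulgA !mulgK.
Qed.
End Props.


Lemma bin2D n : ('C(n, 2) * 2 = n * n.-1)%N.
Proof.
rewrite bin2 muln2 halfK.
case: n => [|n] //=; rewrite oddM /=; by case: (odd n); rewrite subn0.
Qed.

Lemma A1 T L : odd T -> L %| T -> L %| 'C(T, 2).
Proof. by move=> oT LT; rewrite bin2odd // dvdn_mulr. Qed.

Lemma A2 T L : ~~ odd (T %/ L) -> L %| T -> L %| 'C(T, 2).
Proof.
move=> eq LT; have e := bin2D T.
have hq := odd_double_half (T %/ L); rewrite (negbTE eq) add0n in hq.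
have hT : T = ((T %/ L)./2 * 2 * L)%N by rewrite -{1}(divnK LT) muln2 hq.
set r := (T %/ L)./2 in hT; set P := T.-1 in e; set C := 'C(T, 2) in e *.
apply/dvdnP; exists (r * P)%N.
rewrite hT in e; nia.
Qed.

Lemma A3 T L : L %| T -> L %| 'C(T * 2, 2).
Proof.
move=> LT; have e := bin2D (T * 2); set P := (T * 2).-1 in e; set C := 'C(_, 2) in e *.
case/dvdnP: LT => k hT; apply/dvdnP; exists (k * P)%N.
rewrite hT in e; nia.
Qed.

Lemma A4 T L : 0 < T -> ~~ odd T -> odd (T %/ L) -> L %| T -> ~~ (L %| 'C(T, 2)).
Proof.
move=> T0 eT oq LT; apply/negP => /dvdnP[k hk].
have e := bin2D T; rewrite hk in e.
have L0 : 0 < L by apply: dvdn_gt0 LT.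
have hT := esym (divnK LT); set q := T %/ L in hT oq *; set P := T.-1 in e *.
rewrite {1}hT in e.
have : (k * 2 = q * P)%N.
  apply/eqP; rewrite -(eqn_pmul2r L0); apply/eqP; nia.
move/(congr1 odd); rewrite !oddM oq andbF /= /P.
by case: (T) T0 eT => [|T'] //= _; rewrite negbK => ->.
Qed.

Open Scope group_scope.

Lemma hom_gen (gT : finGroupType) (a b : gT) N M L :
  a * [~ a^-1, b^-1] = [~ a^-1, b^-1] * a ->
  b * [~ a^-1, b^-1] = [~ a^-1, b^-1] * b ->
  a ^+ N = 1 -> b ^+ M = 1 -> [~ a^-1, b^-1] ^+ L = 1 ->
  (<[a]> <*> <[b]>)%G \homg
   Grp (x : y : (x * [~ x^-1, y^-1] = [~ x^-1, y^-1] * x,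
                        y * [~ x^-1, y^-1] = [~ x^-1, y^-1] * y,
                        x ^+ N = 1, y ^+ M = 1, [~ x^-1, y^-1] ^+ L = 1)).
Proof.
move=> h1 h2 h3 h4 h5; apply/existsP; exists (a, b).
by rewrite /= !xpair_eqE /= h1 h2 h3 h4 h5 !eqxx.
Qed.

Lemma homH n m l L : KK n m l %| L ->
  (<[X n m l]> <*> <[Y n m l]>)%G \homg
   Grp (x : y : (x * [~ x^-1, y^-1] = [~ x^-1, y^-1] * x,
                        y * [~ x^-1, y^-1] = [~ x^-1, y^-1] * y,
                        x ^+ n.+1 = 1, y ^+ m.+1 = 1, [~ x^-1, y^-1] ^+ L = 1)).
Proof.
move=> KL; apply: hom_gen; rewrite ?commXY.
- exact: Zcent.
- exact: Zcent.
- by apply/eqP; rewrite expX rep1 /= dvdnn ?dvdn0.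
- by apply/eqP; rewrite expY rep1 /= dvdnn ?dvdn0.
- by apply/eqP; rewrite expZ rep1 /= KL ?dvdn0.
Qed.

Lemma part1 M N L (gT : finGroupType) (G : {group gT}) :
  0 < M -> 0 < N -> L %| M -> L %| N -> is_HMNL G M N L ->
  exponent G = (let T := lcmn M N in
                    if odd T || ~~ odd (T %/ L) then T else 2 * T)%N.
Proof.
move=> M0 N0 LM LN isoG; cbv zeta.
have L0 : 0 < L := dvdn_gt0 M0 LM.
have T0 : 0 < lcmn M N by rewrite lcmn_gt0 M0 N0.
have NT : N %| lcmn M N := dvdn_lcmr M N.
have MT : M %| lcmn M N := dvdn_lcml M N.
have LT : L %| lcmn M N := dvdn_trans LM MT.
set T := lcmn M N in T0 NT MT LT *.
have eK : KK N.-1 M.-1 L.-1 = L.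
  by rewrite /KK !prednK //; apply/gcdn_idPr; rewrite dvdn_gcd LN LM.
have KL : KK N.-1 M.-1 L.-1 %| L by rewrite eK.
have hH := @homH N.-1 M.-1 L.-1 L KL.
rewrite !prednK // in hH.
set H := (<[_]> <*> <[_]>)%G in hH.
have hHG : H \homg G by move: isoG; rewrite /is_HMNL => ->.
have eH : exponent H %| exponent G by case/homgP: hHG => f <-; exact: exponent_morphim.
have XH : X N.-1 M.-1 L.-1 \in H by rewrite (subsetP (joing_subl _ _)) // cycle_id.
have YH : Y N.-1 M.-1 L.-1 \in H by rewrite (subsetP (joing_subr _ _)) // cycle_id.
have NH : N %| exponent H.
  have /eqP := expg_exponent XH; rewrite expX rep1 /= prednK //.
  by case/andP.
have MH : M %| exponent H.
  have /eqP := expg_exponent YH; rewrite expY rep1 /= prednK //.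
  by case/andP.
have TH : T %| exponent H by rewrite dvdn_lcm NH MH.
case: ifP => hc.
  have up : exponent G %| T.
    apply: (upper isoG) => //; case/orP: hc => [oT | eq].
      exact: A1.
    exact: A2.
  by apply/eqP; rewrite eqn_dvd up (dvdn_trans TH eH).
have up : exponent G %| (2 * T)%N.
  apply: (upper isoG); rewrite ?dvdn_mull //.
  rewrite mulnC; exact: A3.
move: hc => /negbT; rewrite negb_or negbK => /andP[eT oq].
have nT : ~~ (exponent H %| T).
  apply/negP => /exponentP /(_ _ (groupM YH XH)) /eqP.
  rewrite expYX rep1 /= !prednK // NT MT /= eK.
  by apply/negP; apply: A4.
have eH2 : exponent H = (2 * T)%N.
  case/dvdnP: TH => k hk.
  have kd : k %| 2.
    by rewrite -(dvdn_pmul2r T0) -hk (dvdn_trans eH up).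
  have := dvdn_leq (isT : 0 < 2) kd; move: kd nT; rewrite hk.
  case: k {hk} => [|[|[|k]]] //=; first by rewrite mul1n dvdnn.
by apply/eqP; rewrite eqn_dvd up -eH2 eH.
Qed.

Close Scope group_scope.
Unset Implicit Arguments.

Theorem proposition4 :
  (forall (M N L : nat) (gT : finGroupType) (G : {group gT}),
      0 < M -> 0 < N -> L %| M -> L %| N -> is_HMNL G M N L ->
      exponent G = (let T := lcmn M N in
                    if odd T || ~~ odd (T %/ L) then T else 2 * T)) /\
  (forall (N : nat) (gT : finGroupType) (G : {group gT}),
      0 < N -> odd N -> is_HMNL G N N N -> exponent G = N) /\
  (forall (N : nat) (gT : finGroupType) (G : {group gT}),
      0 < N -> ~~ odd N -> is_HMNL G N N N./2 -> exponent G = N).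
Proof.
split; first exact: part1.
split.
  move=> N gT G N0 oN iso; rewrite (part1 N0 N0 (dvdnn N) (dvdnn N) iso) /=.
  by rewrite (lcmn_idPr (dvdnn N)) oN.
move=> N gT G N0 eN iso.
have hN : N = (N./2 * 2)%N by rewrite muln2 -[LHS](odd_double_half N) (negbTE eN).
have h0 : 0 < N./2 by move: N0; rewrite hN; case: (N./2).
have LN : N./2 %| N by rewrite {2}hN dvdn_mulr.
rewrite (part1 N0 N0 LN LN iso) /= (lcmn_idPr (dvdnn N)).
by rewrite {2}hN mulKn // orbT.
Qed.
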